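(* Let $M$, $M'$ be matroids on ground sets $E$, $E'$ with $E\cap E'=\{p\}$. (a) If $p$ is a coloop of neither $M$ nor $M'$, and every two bases of $M$ intersect or every two bases of $M'$ intersect, then every two bases of $\operatorname{Ser}(M,M')$ intersect. (b) If $p$ is a loop of neither $M$ nor $M'$, and every two bases of $M$ intersect in at least two elements or every two bases of $M'$ intersect in at least two elements, then every two bases of $\operatorname{Par}(M,M')$ intersect.
   Context: The series connection $\operatorname{Ser}(M,M')$ is the matroid on $E\cup E'$ whose bases are the sets $B\cup B'$ with $B$ a basis of $M$, $B'$ a basis of $M'$, $B\cap B'=\varnothing$. The parallel connection $\operatorname{Par}(M,M')$ is the matroid on $E\cup E'$ whose bases are the sets $B\cup B'$ with $B,B'$ bases of $M,M'$ and $B\cap B'=\{p\}$, together with the sets $(B\cup B')\setminus\{p\}$ with $B,B'$ bases of $M,M'$ and $p\in(B\setminus B')\cup(B'\setminus B)$. *)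

(* Defs.v *)
From mathcomp Require Import all_boot.
Set Implicit Arguments. Unset Strict Implicit. Unset Printing Implicit Defensive.

Definition is_matroid_bases (T : finType) (E : {set T}) (BM : {set {set T}}) : Prop :=
  [/\ BM != set0,
      (forall B, B \in BM -> B \subset E) &
      (forall B1 B2, B1 \in BM -> B2 \in BM -> forall x, x \in B1 :\: B2 ->
         exists2 y, y \in B2 :\: B1 & (B1 :\ x) :|: [set y] \in BM)].

Definition is_coloop (T : finType) (E : {set T}) (BM : {set {set T}}) (p : T) : Prop :=
  p \in E /\ forall B, B \in BM -> p \in B.

Definition is_loop (T : finType) (E : {set T}) (BM : {set {set T}}) (p : T) : Prop :=
  p \in E /\ forall B, B \in BM -> p \notin B.

Definition bases_meet_atleast (T : finType) (k : nat) (BM : {set {set T}}) : Prop :=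
  forall B1 B2, B1 \in BM -> B2 \in BM -> k <= #|B1 :&: B2|.

Definition ser_bases (T : finType) (BM BM' : {set {set T}}) : {set {set T}} :=
  [set B :|: B' | B in BM, B' in BM' & B :&: B' == set0].

Definition par_bases (T : finType) (p : T) (BM BM' : {set {set T}}) : {set {set T}} :=
  [set B :|: B' | B in BM, B' in BM' & B :&: B' == [set p]]
  :|: [set (B :|: B') :\ p | B in BM, B' in BM'
          & p \in (B :\: B') :|: (B' :\: B)].

(* Main.v *)
Require Import Defs.
From mathcomp Require Import all_boot.

Lemma ser_sub (T : finType) (BM BM' : {set {set T}}) X :
  X \in ser_bases BM BM' ->
  exists B B', [/\ B \in BM, B' \in BM' & (B \subset X) && (B' \subset X)].
Proof.
case/imset2P => B B' HB; rewrite inE => /andP [HB' _] ->.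
by exists B, B'; rewrite HB HB' subsetUl subsetUr.
Qed.

Lemma par_sub (T : finType) p (BM BM' : {set {set T}}) X :
  X \in par_bases p BM BM' ->
  exists B B', [/\ B \in BM, B' \in BM' & (B :\ p \subset X) && (B' :\ p \subset X)].
Proof.
rewrite inE => /orP [] /imset2P [B B' HB]; rewrite inE => /andP [HB' _] ->.
  exists B, B'; split => //; apply/andP; split; apply: subset_trans (subD1set _ _) _.
    exact: subsetUl. exact: subsetUr.
exists B, B'; split => //; apply/andP; split; apply: setSD.
  exact: subsetUl. exact: subsetUr.
Qed.

Lemma two_elt (T : finType) (A : {set T}) p : 2 <= #|A| -> exists x, x \in A :\ p.
Proof.
move=> H; case: (set_0Vmem (A :\ p)) => [E|[x Hx]]; last by exists x.
have S : A \subset [set p].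
  apply/subsetP => x Hx; rewrite inE; apply/negPn/negP => Hne.
  by have := in_set0 x; rewrite -E !inE Hne Hx.
by have := subset_leq_card S; rewrite cards1 => /(leq_trans H).
Qed.

Theorem lemma6p2 (T : finType) (E E' : {set T}) (p : T)
    (BM BM' : {set {set T}}) :
  E :&: E' = [set p] ->
  is_matroid_bases E BM -> is_matroid_bases E' BM' ->
  (~ is_coloop E BM p -> ~ is_coloop E' BM' p ->
     bases_meet_atleast 1 BM \/ bases_meet_atleast 1 BM' ->
     bases_meet_atleast 1 (ser_bases BM BM'))
  /\
  (~ is_loop E BM p -> ~ is_loop E' BM' p ->
     bases_meet_atleast 2 BM \/ bases_meet_atleast 2 BM' ->
     bases_meet_atleast 1 (par_bases p BM BM')).
Proof.
move=> _ _ _; split.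
  move=> _ _ H X1 X2 /ser_sub [B1 [B1' [h1 h1' /andP [s1 s1']]]]
                    /ser_sub [B2 [B2' [h2 h2' /andP [s2 s2']]]].
  rewrite card_gt0; apply/set0Pn.
  case: H => H.
    have := H _ _ h1 h2; rewrite card_gt0 => /set0Pn [x]; rewrite inE => /andP [a b].
    by exists x; rewrite inE (subsetP s1) // (subsetP s2).
  have := H _ _ h1' h2'; rewrite card_gt0 => /set0Pn [x]; rewrite inE => /andP [a b].
  by exists x; rewrite inE (subsetP s1') // (subsetP s2').
move=> _ _ H X1 X2 /par_sub [B1 [B1' [h1 h1' /andP [s1 s1']]]]
                  /par_sub [B2 [B2' [h2 h2' /andP [s2 s2']]]].
rewrite card_gt0; apply/set0Pn.
case: H => H.
  have [x] := @two_elt _ _ p (H _ _ h1 h2); rewrite !inE => /and3P [a b c].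
  by exists x; rewrite inE (subsetP s1) ?(subsetP s2) // !inE a ?b ?c.
have [x] := @two_elt _ _ p (H _ _ h1' h2'); rewrite !inE => /and3P [a b c].
by exists x; rewrite inE (subsetP s1') ?(subsetP s2') // !inE a ?b ?c.
Qed.
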